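(* Let $n\ge2$ and let $\varphi$ be a skew morphism of $\mathbb{Z}_n$ with even complexity and auto-order $m$. Then $\varphi$ is uniquely determined by the triple $(\varphi(1),\varphi',\varphi|_{\langle m\rangle})$: if $\psi$ is any skew morphism of $\mathbb{Z}_n$ with even complexity such that $\psi(1)=\varphi(1)$, $\psi'=\varphi'$ and $\psi(x)=\varphi(x)$ for all $x$ in the subgroup $\langle m\rangle$ of $\mathbb{Z}_n$, then $\psi=\varphi$.
   Context: $\mathbb{Z}_n$ is the cyclic group of integers modulo $n$; $\langle m\rangle$ is the subgroup generated by $m$. A skew morphism of a finite group $G$ is a permutation $\varphi$ of $G$ fixing the identity such that for each $a\in G$ there is a non-negative integer $i_a$ with $\varphi(ab)=\varphi(a)\varphi^{i_a}(b)$ for all $b\in G$. ${\rm ord}(\varphi)$ is the order of $\langle\varphi\rangle$. If $\varphi$ is non-trivial, $\pi_\varphi(a)$ is the unique such $i_a\in\{1,\dots,{\rm ord}(\varphi)-1\}$; if $\varphi$ is the identity, $\pi_\varphi(a)=1$. Let $\sigma_\varphi(x,y)=\sum_{i=0}^{x-1}\pi_\varphi(\varphi^i(y))\in\mathbb{Z}_{{\rm ord}(\varphi)}$. The derived skew morphism $\varphi'$ of a skew morphism $\varphi$ of $\mathbb{Z}_n$ is the skew morphism of $\mathbb{Z}_{{\rm ord}(\varphi)}$ given by $\varphi'(a)=\sigma_\varphi(a,1)$. Set $\varphi^{(0)}=\varphi$, $\varphi^{(i+1)}=(\varphi^{(i)})'$. For $n\ge 2$ the complexity of $\varphi$ is the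 unique non-negative integer $c$ such that $\varphi^{(c)}$ is a skew morphism of a non-trivial cyclic group $\mathbb{Z}_m$ and $\varphi^{(c+1)}$ is a skew morphism of $\mathbb{Z}_1$; $m$ is the auto-order of $\varphi$. (When the complexity is even, $m$ divides $n$ and $\varphi$ maps $\langle m\rangle$ onto itself.) *)

(* Defs.v *)
(* Z_n is represented by the naturals 0..n-1 with addition
   modulo n; a map on Z_n is a function nat -> nat (only its values on
   0..n-1 matter). This uniform representation is needed because derived
   skew morphisms live on groups Z_m of varying order m. *)
From mathcomp Require Import all_boot.
Set Implicit Arguments. Unset Strict Implicit. Unset Printing Implicit Defensive.

Definition skew_at (n : nat) (f : nat -> nat) (a i : nat) : bool :=
  all (fun b => f ((a + b) %% n) == (f a + iter i f b) %% n) (iota 0 n).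

Definition is_skew (n : nat) (f : nat -> nat) : Prop :=
  [/\ 0 < n,
      (forall x, x < n -> f x < n),
      (forall x y, x < n -> y < n -> f x = f y -> x = y),
      f 0 = 0 &
      (forall a, a < n -> exists i, skew_at n f a i)].

(* ord(f): the least k >= 1 with f^k = id on Z_n (the order of a permutation
   of n points divides n!, so the search bound n`! suffices) *)
Definition skord (n : nat) (f : nat -> nat) : nat :=
  (find (fun k => all (fun x => iter k.+1 f x == x) (iota 0 n)) (iota 0 n`!)).+1.

(* pi_f(a): the i in {1,...,ord f - 1} with skew_at n f a i (unique for a
   skew morphism); 1 if f is the identity (ord f = 1) *)
Definition skpi (n : nat) (f : nat -> nat) (a : nat) : nat :=
  if skord n f == 1 then 1
  else nth 0 [seq i <- iota 1 (skord n f).-1 |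
              skew_at n f a i] 0.

Definition sksigma (n : nat) (f : nat -> nat) (x y : nat) : nat :=
  (\sum_(i < x) skpi n f (iter i f y)) %% skord n f.

Definition derived (n : nat) (f : nat -> nat) : nat -> nat :=
  fun a => sksigma n f a (1 %% n).

Definition derive (p : nat * (nat -> nat)) : nat * (nat -> nat) :=
  (skord p.1 p.2, derived p.1 p.2).

Definition nth_derived (k : nat) (n : nat) (f : nat -> nat) : nat * (nat -> nat) :=
  iter k derive (n, f).

Definition complexity (n : nat) (f : nat -> nat) (c : nat) : Prop :=
  2 <= (nth_derived c n f).1 /\ (nth_derived c.+1 n f).1 = 1.

Definition auto_order (n : nat) (f : nat -> nat) (c : nat) : nat :=
  (nth_derived c n f).1.

(* Main.v *)
Require Import Defs.
From mathcomp Require Import all_boot.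
From mathcomp Require Import all_fingroup zify.
From Stdlib Require Import FunctionalExtensionality.
Set Implicit Arguments. Unset Strict Implicit. Unset Printing Implicit Defensive.


Lemma skew_atP n f a i :
  reflect (forall b, b < n -> f ((a + b) %% n) = (f a + iter i f b) %% n)
          (skew_at n f a i).
Proof.
apply: (iffP allP) => H b.
- by move=> Hb; apply/eqP/H; rewrite mem_iota.
- by rewrite mem_iota add0n => Hb; apply/eqP/H.
Qed.

Lemma iter_lt n f k x : (forall y, y < n -> f y < n) -> x < n -> iter k f x < n.
Proof. by move=> Hf Hx; elim: k => //= k IH; apply: Hf. Qed.

Definition isperm n f := (forall x, x < n -> f x < n) /\
  (forall x y, x < n -> y < n -> f x = f y -> x = y).

Lemma skew_perm n f : is_skew n f -> isperm n f.
Proof. by case. Qed.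

Definition skpred n f := fun k => all (fun x => iter k.+1 f x == x) (iota 0 n).

Lemma skord_has n f : isperm n f -> has (skpred n f) (iota 0 n`!).
Proof.
case=> Hf Hi.
case: (posnP n) => [->|n0].
  by rewrite /= /skpred /=.
pose fo := fun i : 'I_n => Ordinal (Hf _ (ltn_ord i)).
have fo_inj : injective fo.
  by move=> i j /(congr1 val) /= /Hi => H; apply/val_inj/H.
pose p := perm fo_inj.
have Hp : forall k (i : 'I_n), val ((p ^+ k)%g i) = iter k f i.
  move=> k i; rewrite permX; elim: k => //= k IH.
  by rewrite permE /= IH.
have ord_le : #[p]%g <= n`!.
  apply: dvdn_leq; first exact: fact_gt0.
  have := cardSg (subsetT <[p]>%g).
  rewrite cardsT.
  by rewrite card_Sn.
apply/hasP; exists (#[p]%g).-1.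
  by rewrite mem_iota add0n prednK ?order_gt0.
apply/allP => x; rewrite mem_iota add0n => Hx.
rewrite prednK ?order_gt0 //.
have := Hp (#[p]%g) (Ordinal Hx).
by rewrite expg_order perm1 /= => <-.
Qed.


Lemma skord_gt0 n f : 0 < skord n f.
Proof. by []. Qed.


Lemma skord_id n f : isperm n f -> forall x, x < n -> iter (skord n f) f x = x.
Proof.
move=> Hp x Hx; have H := skord_has Hp.
have := nth_find 0 H; rewrite has_find size_iota in H.
rewrite nth_iota // add0n => /allP /(_ x); rewrite mem_iota add0n => /(_ Hx) /eqP.
by [].
Qed.

Lemma skord_min n f k : isperm n f -> 0 < k < skord n f ->
  ~ (forall x, x < n -> iter k f x = x).
Proof.
move=> Hp /andP [k0 kr] H.
have H1 := skord_has Hp; rewrite has_find size_iota in H1.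
have kf : k.-1 < find (skpred n f) (iota 0 n`!) by rewrite -ltnS prednK.
have := before_find 0 kf; rewrite nth_iota ?add0n; last exact: ltn_trans H1.
rewrite /skpred prednK //; move/negbT/negP; apply.
by apply/allP => x; rewrite mem_iota add0n => Hx; apply/eqP/H.
Qed.

Lemma iter_mul n f q x : isperm n f -> x < n -> iter (q * skord n f) f x = x.
Proof.
move=> Hp Hx; elim: q => // q IH.
by rewrite mulSn iterD IH skord_id.
Qed.

Lemma iter_mod n f k x : isperm n f -> x < n ->
  iter k f x = iter (k %% skord n f) f x.
Proof.
move=> Hp Hx; rewrite {1}(divn_eq k (skord n f)) addnC iterD iter_mul //.
Qed.

Lemma iter_eq_aux n f a b : isperm n f -> a <= b -> b < skord n f ->
  (forall x, x < n -> iter a f x = iter b f x) -> a = b.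
Proof.
move=> Hp le br H'.
have Hf : forall y, y < n -> f y < n by case: Hp.
have ar : a < skord n f by exact: leq_ltn_trans le br.
have fix0 : forall x, x < n -> iter (b - a) f x = x.
  move=> x Hx.
  have e : b - a + skord n f = b + (skord n f - a).
    by move: ar; set r := skord n f; lia.
  rewrite -{1}(skord_id Hp Hx) -iterD e iterD -H' ?iter_lt //.
  by rewrite -iterD (subnKC (ltnW ar)) skord_id.
case: (posnP (b - a)) => h; first by apply/eqP; rewrite eqn_leq le -subn_eq0 h.
exfalso; apply: (skord_min Hp _ fix0).
by rewrite h /= (leq_ltn_trans (leq_subr _ _)).
Qed.

Lemma iter_eq_mod n f i j : isperm n f ->
  (forall x, x < n -> iter i f x = iter j f x) -> i %% skord n f = j %% skord n f.
Proof.
move=> Hp H.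
have H' : forall x, x < n -> iter (i %% skord n f) f x = iter (j %% skord n f) f x.
  by move=> x Hx; rewrite -!iter_mod // H.
have ir : i %% skord n f < skord n f by rewrite ltn_mod.
have jr : j %% skord n f < skord n f by rewrite ltn_mod.
case: (leqP (i %% skord n f) (j %% skord n f)) => h.
  exact: iter_eq_aux h jr H'.
apply/esym/(iter_eq_aux Hp (ltnW h) ir) => x Hx; by rewrite H'.
Qed.

Lemma skord1 n f : skord n f = 1 -> forall x, x < n -> f x = x.
Proof.
rewrite /skord => -[] H x Hx.
have Hh : has (skpred n f) (iota 0 n`!) by rewrite has_find H size_iota fact_gt0.
have := nth_find 0 Hh; rewrite H nth_iota ?fact_gt0 //.
by move=> /allP /(_ x); rewrite mem_iota add0n => /(_ Hx) /eqP.
Qed.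


Lemma skew_at_mod n f y i : isperm n f -> skew_at n f y i ->
  skew_at n f y (i %% skord n f).
Proof.
move=> Hp /skew_atP H; apply/skew_atP => b Hb.
by rewrite -iter_mod // H.
Qed.

Lemma skew_fix_all n f y : isperm n f -> f 0 = 0 -> y < n ->
  (forall b, b < n -> f ((y + b) %% n) = (f y + b) %% n) ->
  forall x, x < n -> f x = x.
Proof.
move=> [Hf Hi] f0 Hy H.
have n0 : 0 < n by apply: leq_ltn_trans Hy.
have fy : f y = y.
  case: (posnP y) => [->//|y0].
  have Hb : n - y < n by lia.
  have := H _ Hb.
  have -> : y + (n - y) = n by lia.
  rewrite modnn f0.
  have fyn := Hf _ Hy.
  case: (leqP y (f y)) => h.
    have -> : f y + (n - y) = (f y - y) + n by lia.
    rewrite modnDr modn_small; last by lia.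
    by move=> /esym; lia.
  rewrite modn_small; last by lia.
  by lia.
move=> x Hx.
have Hb : (x + (n - y)) %% n < n by rewrite ltn_mod.
have := H _ Hb; rewrite fy modnDmr.
have -> : y + (x + (n - y)) = x + n by lia.
by rewrite modnDr modn_small.
Qed.

Lemma skew_valid n f y : is_skew n f -> y < n -> skew_at n f y (skpi n f y).
Proof.
move=> Hs Hy; have Hp := skew_perm Hs; case: Hs => n0 Hf Hi f0 Hex.
rewrite /skpi; case: eqP => r1.
  apply/skew_atP => b Hb /=.
  have Hid := skord1 r1.
  by rewrite !Hid // ltn_mod.
have [i Hi0] := Hex _ Hy.
have Hi' := skew_at_mod Hp Hi0.
have rgt : 1 < skord n f by have := skord_gt0 n f; lia.
case: (posnP (i %% skord n f)) => h.
  exfalso; apply: (skord_min (k := 1) Hp); first by rewrite rgt.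
  move=> x Hx /=; apply: (skew_fix_all Hp f0 Hy) => // b Hb.
  by move/skew_atP: Hi'; rewrite h => ->.
have mem : i %% skord n f \in [seq i0 <- iota 1 (skord n f).-1 | skew_at n f y i0].
  rewrite mem_filter Hi' mem_iota h andTb.
  have := ltn_pmod i (skord_gt0 n f); move: rgt.
  case: (skord n f) => // r'; rewrite /= => _ ?; lia.
move: mem; case E: [seq i0 <- _ | _] => [|h0 t] // _.
have : h0 \in [seq i0 <- iota 1 (skord n f).-1 | skew_at n f y i0] by rewrite E mem_head.
by rewrite mem_filter => /andP [].
Qed.


Definition Ss n f j a := \sum_(i < j) skpi n f (iter i f a).

Lemma Ss0r n f a : Ss n f 0 a = 0.
Proof. by rewrite /Ss big_ord0. Qed.

Lemma SsS n f j a : Ss n f j.+1 a = Ss n f j a + skpi n f (iter j f a).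
Proof. by rewrite /Ss big_ord_recr. Qed.

Lemma canc n c x y : x < n -> y < n -> (c + x) %% n = (c + y) %% n -> x = y.
Proof. by move=> Hx Hy /eqP; rewrite eqn_modDl !modn_small // => /eqP. Qed.

Lemma skew_rng n f : is_skew n f -> forall x, x < n -> f x < n.
Proof. by case. Qed.

Lemma F1 n f j a b : is_skew n f -> a < n -> b < n ->
  iter j f ((a + b) %% n) = (iter j f a + iter (Ss n f j a) f b) %% n.
Proof.
move=> Hs Ha Hb; have Hf := skew_rng Hs.
elim: j => [|j IH]; first by rewrite Ss0r.
rewrite iterS IH.
have HA : iter j f a < n by apply: iter_lt.
have HB : iter (Ss n f j a) f b < n by apply: iter_lt.
move/skew_atP: (skew_valid Hs HA) => ->//.
by rewrite -iterD SsS (addnC (skpi _ _ _)).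
Qed.

Lemma F0 n f : is_skew n f -> skpi n f 0 %% skord n f = 1 %% skord n f.
Proof.
move=> Hs; have Hp := skew_perm Hs; apply: iter_eq_mod => // x Hx.
have Hn : 0 < n by case: Hs.
move/skew_atP: (skew_valid Hs Hn) => /(_ x Hx).
case: Hs => _ Hf _ f0 _.
by rewrite add0n f0 add0n !modn_small // ?Hf // (iter_lt _ Hf).
Qed.

Lemma iter_f0 n f k : is_skew n f -> iter k f 0 = 0.
Proof. by case=> _ _ _ f0 _; elim: k => //= k ->. Qed.

Lemma Ss_at0 n f j : is_skew n f -> Ss n f j 0 %% skord n f = j %% skord n f.
Proof.
move=> Hs.
have -> : Ss n f j 0 = j * skpi n f 0.
  rewrite /Ss (eq_bigr (fun _ => skpi n f 0)); last by move=> i _; rewrite (iter_f0 _ Hs).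
  by rewrite sum_nat_const card_ord.
by rewrite -modnMmr F0 // modnMmr muln1.
Qed.

Lemma F3 n f j k a : Ss n f (j + k) a = Ss n f j a + Ss n f k (iter j f a).
Proof.
elim: k => [|k IH]; first by rewrite addn0 Ss0r addn0.
by rewrite addnS !SsS IH -addnA -iterD (addnC k j).
Qed.

Lemma F5 n f a : is_skew n f -> a < n -> Ss n f (skord n f) a %% skord n f = 0.
Proof.
move=> Hs Ha; have Hp := skew_perm Hs.
have n0 : 0 < n by case: Hs.
rewrite -(mod0n (skord n f)); apply: iter_eq_mod => // b Hb /=.
have := F1 (skord n f) Hs Ha Hb.
rewrite (skord_id Hp (ltn_pmod _ n0)) (skord_id Hp Ha).
by move/(canc Hb (iter_lt _ (skew_rng Hs) Hb)) => E; rewrite -E.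
Qed.

Lemma Per_aux n f s q a : is_skew n f -> a < n ->
  Ss n f (s + q * skord n f) a %% skord n f = Ss n f s a %% skord n f.
Proof.
move=> Hs Ha; elim: q => [|q IH]; first by rewrite mul0n addn0.
have -> : s + q.+1 * skord n f = (s + q * skord n f) + skord n f.
  by rewrite mulSn addnCA addnC.
rewrite F3 -modnDmr F5 ?addn0 //.
by apply: iter_lt => //; apply: skew_rng.
Qed.

Lemma Per n f k a : is_skew n f -> a < n ->
  Ss n f k a %% skord n f = Ss n f (k %% skord n f) a %% skord n f.
Proof.
move=> Hs Ha; rewrite {1}(divn_eq k (skord n f)) addnC Per_aux //.
Qed.

Lemma F4 n f j a b : is_skew n f -> a < n -> b < n ->
  Ss n f j ((a + b) %% n) %% skord n f = Ss n f (Ss n f j a) b %% skord n f.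
Proof.
move=> Hs Ha Hb; have Hp := skew_perm Hs; have Hf := skew_rng Hs.
have n0 : 0 < n by case: Hs.
apply: iter_eq_mod => // c Hc.
have E1 := F1 j Hs (ltn_pmod (a + b) n0) Hc.
rewrite (F1 j Hs Ha Hb) in E1.
have E2 := F1 j Hs Ha (ltn_pmod (b + c) n0).
rewrite (F1 (Ss n f j a) Hs Hb Hc) in E2.
have E3 : ((a + b) %% n + c) %% n = (a + (b + c) %% n) %% n.
  by rewrite modnDml modnDmr addnA.
rewrite E3 E2 modnDml modnDmr addnA in E1.
by apply/esym/(canc _ _ E1); apply: iter_lt => //; apply: iter_lt.
Qed.


Lemma der_eq n f a : derived n f a = Ss n f a (1 %% n) %% skord n f.
Proof. by []. Qed.

Lemma K1 n f x k : is_skew n f -> x < n ->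
  Ss n f k x %% skord n f = iter x (derived n f) (k %% skord n f).
Proof.
move=> Hs; elim: x k => [|x IH] k Hx; first exact: Ss_at0.
have n2 : 1 < n by apply: leq_ltn_trans Hx.
have e1 : 1 %% n = 1 by rewrite modn_small.
have Hx' : x < n by apply: ltnW.
have := F4 k Hs Hx' (ltn_pmod 1 (ltnW n2)).
rewrite e1 addn1 (modn_small Hx) => ->.
by rewrite Per ?ltn_mod ?(ltnW n2) // IH // iterS der_eq e1.
Qed.

Lemma iter_n_der n f k : is_skew n f -> k < skord n f ->
  iter n (derived n f) k = k.
Proof.
move=> Hs Hk; have n0 : 0 < n by case: Hs.
have e : (n.-1 + 1 %% n) %% n = 0.
  have [n1|n2] : n = 1 \/ 1 < n by lia.
    by rewrite n1.
  by rewrite (modn_small n2) addn1 prednK // modnn.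
have Hn1 : n.-1 < n by rewrite prednK.
have := F4 k Hs Hn1 (ltn_pmod 1 n0).
rewrite e Ss_at0 // (modn_small Hk) Per ?ltn_pmod // (K1 k Hs Hn1) -der_eq.
by rewrite (modn_small Hk) -iterS prednK // => <-.
Qed.

Lemma der_skew_at n f a : is_skew n f -> a < skord n f ->
  skew_at (skord n f) (derived n f) a (iter a f (1 %% n)).
Proof.
move=> Hs Ha; have n0 : 0 < n by case: Hs.
have Hf := skew_rng Hs.
apply/skew_atP => k Hk.
have He : iter a f (1 %% n) < n by apply: iter_lt => //; apply: ltn_pmod.
rewrite der_eq -Per ?ltn_pmod // F3 -modnDml -modnDmr (K1 k Hs He).
by rewrite (modn_small Hk) -der_eq.
Qed.

Lemma derived_skew n f : is_skew n f -> is_skew (skord n f) (derived n f).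
Proof.
move=> Hs; have n0 : 0 < n by case: Hs.
have Hf := skew_rng Hs.
split.
- exact: skord_gt0.
- by move=> x _; rewrite der_eq ltn_pmod.
- move=> x y Hx Hy E.
  have := congr1 (iter n.-1 (derived n f)) E.
  by rewrite -!iterSr prednK // !iter_n_der.
- by rewrite der_eq Ss0r mod0n.
by move=> a Ha; exists (iter a f (1 %% n)); apply: der_skew_at.
Qed.

Lemma skew_uniq n f y i j : is_skew n f -> y < n ->
  skew_at n f y i -> skew_at n f y j -> i %% skord n f = j %% skord n f.
Proof.
move=> Hs Hy /skew_atP Hi /skew_atP Hj; apply: iter_eq_mod; first exact: skew_perm.
move=> x Hx; have Hf := skew_rng Hs.
apply: (@canc n (f y)); try by apply: iter_lt.
by rewrite -(Hi x Hx) -(Hj x Hx).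
Qed.

Lemma D2 n f : is_skew n f -> skord (skord n f) (derived n f) %| n.
Proof.
move=> Hs; have Hg := derived_skew Hs.
rewrite /dvdn; apply/eqP; rewrite -(mod0n (skord (skord n f) (derived n f))).
apply: iter_eq_mod; first exact: skew_perm.
by move=> x Hx; rewrite iter_n_der.
Qed.

Lemma fsum n f a : is_skew n f -> a < n ->
  f a = (\sum_(i < a) iter (skpi n f i) f (1 %% n)) %% n.
Proof.
move=> Hs; elim: a => [|a IH] Ha.
  by rewrite big_ord0 mod0n; case: Hs.
have n2 : 1 < n by apply: leq_ltn_trans Ha.
have Ha' : a < n by apply: ltnW.
have := skew_valid Hs Ha' => /skew_atP /(_ _ n2).
rewrite (modn_small n2) addn1 (modn_small Ha) => ->.
by rewrite big_ord_recr /= IH // modnDml (modn_small n2).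
Qed.

Lemma sum_mod_eq (k d : nat) (F G : nat -> nat) :
  (forall i, i < k -> F i %% d = G i %% d) ->
  (\sum_(i < k) F i) %% d = (\sum_(i < k) G i) %% d.
Proof.
elim: k => [|k IH] H; first by rewrite !big_ord0.
rewrite !big_ord_recr /= -modnDml IH; last by move=> i Hi; apply: H; apply: ltnW.
by rewrite modnDml -modnDmr H // modnDmr.
Qed.

Lemma D3 n f a : is_skew n f -> a < n ->
  derived (skord n f) (derived n f) a =
  f a %% skord (skord n f) (derived n f).
Proof.
move=> Hs Ha; have Hg := derived_skew Hs; have n0 : 0 < n by case: Hs.
rewrite der_eq (fsum Hs Ha) (modn_dvdm _ (D2 Hs)).
rewrite /Ss.
apply: (sum_mod_eq (F := fun i => skpi (skord n f) (derived n f)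
                      (iter i (derived n f) (1 %% skord n f)))
                   (G := fun i => iter (skpi n f i) f (1 %% n))) => i Hia.
have Hi : i < n by apply: ltn_trans Ha.
have Hy : iter i (derived n f) (1 %% skord n f) < skord n f.
  by apply: iter_lt; [case: Hg|apply: ltn_pmod].
rewrite (skew_uniq Hg Hy (skew_valid Hg Hy) (der_skew_at Hs Hy)).
rewrite -K1 //.
have -> : Ss n f 1 i = skpi n f i by rewrite /Ss big_ord1.
rewrite -iter_mod //.
  exact: skew_perm Hs.
exact: ltn_pmod.
Qed.

Lemma D3' n f b : is_skew n f -> b < n ->
  derived (skord n f) (derived n f) (b %% skord (skord n f) (derived n f)) =
  f b %% skord (skord n f) (derived n f).
Proof.
move=> Hs Hb; have Hg := derived_skew Hs.
rewrite -D3 // !der_eq -Per //; apply: ltn_pmod; exact: skord_gt0.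
Qed.


Lemma tower n f k : is_skew n f ->
  [/\ is_skew (nth_derived k.*2 n f).1 (nth_derived k.*2 n f).2,
      (nth_derived k.*2 n f).1 %| n &
      forall a, a < n -> (nth_derived k.*2 n f).2 (a %% (nth_derived k.*2 n f).1)
                          = f a %% (nth_derived k.*2 n f).1].
Proof.
move=> Hs; elim: k => [|k [IH1 IH2 IH3]].
  split=> //= a Ha; rewrite !modn_small //; exact: skew_rng Hs a Ha.
rewrite doubleS /nth_derived /= -/(nth_derived k.*2 n f).
move: IH1 IH2 IH3; case: (nth_derived k.*2 n f) => N h /= HN1 HN2 HN3.
split.
- exact: derived_skew (derived_skew HN1).
- exact: dvdn_trans (D2 HN1) HN2.
move=> a Ha.
have HN0 : 0 < N by case: HN1.
rewrite -(modn_dvdm a (D2 HN1)) D3' ?ltn_pmod // HN3 //.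
by rewrite (modn_dvdm _ (D2 HN1)).
Qed.

Lemma even_level n f c : is_skew n f -> ~~ odd c ->
  (nth_derived c.+1 n f).1 = 1 ->
  (nth_derived c n f).1 %| n /\
  forall a, a < n -> f a %% (nth_derived c n f).1 = a %% (nth_derived c n f).1.
Proof.
move=> Hs Hc H1.
have Ec : c = (c./2).*2 by rewrite -{1}(odd_double_half c) (negbTE Hc).
move: H1; rewrite Ec.
have [T1 T2 T3] := tower c./2 Hs.
move: T1 T2 T3; rewrite /nth_derived /=.
case: (iter (c./2).*2 derive (n, f)) => N h /= T1 T2 T3 H1.
split=> // a Ha.
have HN0 : 0 < N by case: T1.
rewrite -T3 //; apply: (skord1 H1); exact: ltn_pmod.
Qed.

Lemma iter_congr r (g1 g2 : nat -> nat) i x :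
  (forall a, a < r -> g1 a = g2 a) -> (forall a, a < r -> g2 a < r) ->
  x < r -> iter i g1 x = iter i g2 x.
Proof.
move=> H R Hx.
suff : iter i g1 x = iter i g2 x /\ iter i g2 x < r by case.
elim: i => [|i [IH1 IH2]] //=.
by rewrite IH1 H // R.
Qed.

Lemma skew_at_congr r g1 g2 y i :
  (forall a, a < r -> g1 a = g2 a) -> (forall a, a < r -> g2 a < r) -> y < r ->
  skew_at r g1 y i = skew_at r g2 y i.
Proof.
move=> H R Hy; rewrite /skew_at; apply: eq_in_all => b; rewrite mem_iota add0n => Hb.
have r0 : 0 < r by apply: leq_ltn_trans Hy.
by rewrite !H ?ltn_pmod // (iter_congr _ H R Hb).
Qed.

Lemma skord_congr r g1 g2 :
  (forall a, a < r -> g1 a = g2 a) -> (forall a, a < r -> g2 a < r) ->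
  skord r g1 = skord r g2.
Proof.
move=> H R; rewrite /skord; congr (_.+1); apply: eq_find => k.
apply: eq_in_all => x; rewrite mem_iota add0n => Hx.
by rewrite (iter_congr _ H R Hx).
Qed.

Lemma derive_congr r g1 g2 : 0 < r ->
  (forall a, a < r -> g1 a = g2 a) -> (forall a, a < r -> g2 a < r) ->
  derive (r, g1) = derive (r, g2).
Proof.
move=> r0 H R; rewrite /derive /=.
have Ho := skord_congr H R.
congr (_, _) => //; apply: functional_extensionality => a.
rewrite !der_eq Ho; congr (_ %% _); apply: eq_bigr => i _.
have Hy : iter i g2 (1 %% r) < r.
  by elim: (nat_of_ord i) => [|j IH] /=; [apply: ltn_pmod|apply: R].
rewrite (iter_congr _ H R (ltn_pmod 1 r0)).
rewrite /skpi Ho; case: eqP => // _.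
congr (nth 0 _ 0); apply: eq_in_filter => j _.
exact: skew_at_congr.
Qed.

Unset Implicit Arguments.

Theorem theorem4p3 (n : nat) (phi psi : nat -> nat) (c d : nat) :
  2 <= n ->
  is_skew n phi -> complexity n phi c -> ~~ odd c ->
  is_skew n psi -> complexity n psi d -> ~~ odd d ->
  psi 1 = phi 1 ->
  skord n psi = skord n phi ->
  (forall a, a < skord n phi -> derived n psi a = derived n phi a) ->
  (forall x, x < n -> auto_order n phi c %| x -> psi x = phi x) ->
  forall x, x < n -> psi x = phi x.
Proof.
move=> n2 Hphi [Cphi1 Cphi2] Hc Hpsi _ _ H1 Hord Hder Hm.
have n0 : 0 < n by apply: ltnW.
have e1 : 1 %% n = 1 by rewrite modn_small.
have Pphi := skew_perm Hphi; have Ppsi := skew_perm Hpsi.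
have Rphi := skew_rng Hphi; have Rpsi := skew_rng Hpsi.
case: (eqVneq (skord n phi) 1) => [r1|r1].
  move=> x Hx; rewrite (skord1 r1 Hx) (skord1 _ Hx) //; by rewrite Hord.
set r := skord n phi in Hord Hder r1 *.
have r2 : 1 < r by have := skord_gt0 n phi; rewrite -/r; lia.
have [c' Ec] : exists c', c = c'.+2.
  case: c Cphi1 Cphi2 Hc Hm => [|[|c']] //=; last by exists c'.
  move=> _ H; rewrite /nth_derived /= in H.
  by move: r1; rewrite /r H eqxx.
subst c.
have L2 : forall k, nth_derived k.+2 n psi = nth_derived k.+2 n phi.
  move=> k; rewrite /nth_derived -(addn2 k) !iterD; congr (iter k derive _).
  change (derive (skord n psi, derived n psi) = derive (skord n phi, derived n phi)).
  rewrite Hord.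
  apply: derive_congr; first exact: skord_gt0.
    by move=> a Ha; rewrite Hder.
  by move=> a _; rewrite der_eq ltn_pmod.
rewrite /auto_order in Hm.
set m := (nth_derived c'.+2 n phi).1 in Hm.
have [mn Mphi] := even_level Hphi Hc Cphi2.
have Cpsi2 : (nth_derived c'.+3 n psi).1 = 1 by rewrite L2.
have [_ Mpsi] := even_level Hpsi Hc Cpsi2.
rewrite L2 -/m in Mpsi; rewrite -/m in mn Mphi.
have m0 : 0 < m by rewrite /m; apply: leq_trans Cphi1.
have Iw : forall x, x < n -> m %| x -> forall j, iter j phi x = iter j psi x.
  move=> x Hx Hmx j.
  suff : [/\ iter j phi x = iter j psi x, iter j psi x < n & m %| iter j psi x] by case.
  elim: j => [|j [IH1 IH2 IH3]] //=.
  split; first by rewrite IH1 Hm.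
    exact: Rpsi.
  by rewrite /dvdn Mpsi //; apply: IH3.
pose w := (phi 1 + (n - 1)) %% n.
have wn : w < n by rewrite ltn_pmod.
have wphi : (1 + w) %% n = phi 1.
  rewrite modnDmr.
  have -> : 1 + (phi 1 + (n - 1)) = phi 1 + n by lia.
  by rewrite modnDr modn_small // Rphi.
have wm : m %| w.
  rewrite /dvdn /w (modn_dvdm _ mn) -modnDml Mphi // modnDml.
  have -> : 1 + (n - 1) = n by lia.
  by rewrite -/(dvdn _ _) mn.
have hE1 : forall b, Ss n phi b 1 %% r = derived n phi b.
  by move=> b; rewrite der_eq e1.
have hE2 : forall b, Ss n psi b 1 %% r = derived n psi b.
  by move=> b; rewrite der_eq e1 Hord.
have U : forall b, b <= r -> iter b phi 1 = iter b psi 1.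
  elim=> [|b IH] Hb //.
  have br : b < r := Hb.
  rewrite !iterSr H1 -wphi (F1 b Hphi n2 wn) (F1 b Hpsi n2 wn) IH ?(ltnW br) //.
  rewrite (iter_mod _ Pphi wn) (iter_mod _ Ppsi wn) Hord -/r.
  by rewrite hE1 hE2 Hder // Iw.
have X : forall x, x < n -> forall b, b < r -> iter b phi x = iter b psi x.
  elim=> [|x IH] Hx b Hb; first by rewrite (iter_f0 _ Hphi) (iter_f0 _ Hpsi).
  have Hx' : x < n by apply: ltnW.
  have -> : x.+1 = (1 + x) %% n by rewrite add1n modn_small.
  rewrite (F1 b Hphi n2 Hx') (F1 b Hpsi n2 Hx') U ?(ltnW Hb) //.
  rewrite (iter_mod _ Pphi Hx') (iter_mod _ Ppsi Hx') Hord -/r.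
  rewrite hE1 hE2 Hder // IH //.
  by rewrite der_eq ltn_pmod.
move=> x Hx; symmetry; exact: (X x Hx 1 r2).
Qed.
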